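(* For any finite graph $G$ and any $\varepsilon>0$, the convexity space $\mathcal{C}(G)$ has weak $\varepsilon$-nets of size at most $(480/\varepsilon)^{8\nu_{\mathrm{bi}}(G)\log(1/\varepsilon)}$. In other words, for any set system $\mathcal{G}\subseteq\mathcal{C}(G)$, $$\tau(\mathcal{G})\le (480\,\tau^*(\mathcal{G}))^{8\nu_{\mathrm{bi}}(G)\log\tau^*(\mathcal{G})}.$$
   Context: Let $X=\mathrm{MIS}(G)$ be the set of maximal independent sets of $G$; for $S\subseteq V(G)$ let $K_S=\{I\in X: S\subseteq I\}$; $\mathcal{C}(G)=\{K_S: S\subseteq V(G)\}$. Given a finitely supported probability measure $\mu$ on $X$, a set $N\subseteq X$ is a weak $\varepsilon$-net for $\mathcal{C}(G)$ with respect to $\mu$ if $N\cap C\ne\emptyset$ for every $C\in\mathcal{C}(G)$ with $\mu(C)\ge\varepsilon$; $\mathcal{C}(G)$ has weak $\varepsilon$-nets of size $m$ if for every finitely supported probability measure $\mu$ on $X$ there is such a net of size at most $m$. $\tau(\mathcal{G})$ is the minimum size of a set $T\subseteq X$ meeting every member of $\mathcal{G}$; $\tau^*(\mathcal{G})$ is the minimum of $\sum_{x\in X}f(x)$ over functions $f:X\to[0,1]$ with $\sum_{x\in A}f(x)\ge1$ for all $A\in\mathcal{G}$. $\nu_{\mathrm{bi}}(G)$ is the largest $t$ such that $G$ has $2t$ distinct vertices $u_1,\dots,u_t,v_1,\dots,v_t$ with $u_iv_j\in E(G)$ iff $i=j$. Logarithms are natural. *)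

(* Defs.v *)
From HB Require Import structures.
From mathcomp Require Import all_boot all_order all_algebra.
From mathcomp Require Import all_classical all_reals all_analysis.
Set Implicit Arguments. Unset Strict Implicit. Unset Printing Implicit Defensive.
Import Order.TTheory GRing.Theory Num.Theory.
Local Open Scope ring_scope.

Section Defs.
Variables (V : finType) (e : rel V).

Definition independent (I : {set V}) : bool :=
  [forall x in I, forall y in I, ~~ e x y].

Definition MIS : {set {set V}} := [set I | maxset independent I].

Definition KS (S : {set V}) : {set {set V}} := [set I in MIS | S \subset I].

Definition CG : {set {set {set V}}} := [set KS S | S : {set V}].

Definition has_bi_matching (t : nat) : bool :=
  [exists u : {ffun 'I_t -> V}, exists v : {ffun 'I_t -> V},
     [&& injectiveb u, injectiveb v,
         [forall i, forall j, u i != v j] &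
         [forall i, forall j, e (u i) (v j) == (i == j)]]].

(* nu_bi(G): the largest such t (t <= |V| automatically). *)
Definition nu_bi : nat := \max_(t < #|V|.+1 | has_bi_matching t) t.

(* tau(F): minimum size of T subset X meeting every member of F
   (only meaningful when every member is nonempty, then X itself works). *)
Definition hitting (F : {set {set {set V}}}) (T : {set {set V}}) : bool :=
  (T \subset MIS) && [forall A in F, T :&: A != finset.set0].

Definition tauG (F : {set {set {set V}}}) : nat :=
  \big[minn/#|MIS|]_(T : {set {set V}} | hitting F T) #|T|.

Variable R : realType.

(* Fractional covers f : X -> [0,1]; values outside X are irrelevant. *)
Definition frac_cover (F : {set {set {set V}}}) (f : {set V} -> R) : Prop :=
  (forall x, 0 <= f x <= 1) /\ (forall A, A \in F -> 1 <= \sum_(x in A) f x).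

Definition tau_starG (F : {set {set {set V}}}) : R :=
  inf [set t : R | exists f, frac_cover F f /\ t = \sum_(x in MIS) f x].

Definition prob_on_MIS (mu : {set V} -> R) : Prop :=
  (forall I, 0 <= mu I) /\ (forall I, I \notin MIS -> mu I = 0) /\
  \sum_(I in MIS) mu I = 1.

Definition measure_of (mu : {set V} -> R) (C : {set {set V}}) : R :=
  \sum_(I in C) mu I.

Definition weak_net (mu : {set V} -> R) (eps : R) (N : {set {set V}}) : Prop :=
  N \subset MIS /\
  forall C, C \in CG -> eps <= measure_of mu C -> N :&: C != finset.set0.

Definition has_weak_nets (eps m : R) : Prop :=
  forall mu, prob_on_MIS mu ->
    exists N, weak_net mu eps N /\ (#|N|%:R <= m).

End Defs.

(* Main.v *)
Require Import Defs.
From HB Require Import structures.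
From mathcomp Require Import all_boot all_order all_algebra.
From mathcomp Require Import all_classical all_reals all_analysis.
From mathcomp Require Import zify ring lra.
Import fintype finset.
Set Implicit Arguments. Unset Strict Implicit. Unset Printing Implicit Defensive.
Import Order.TTheory GRing.Theory Num.Theory.
Local Open Scope ring_scope.

Local Notation fset0 := finset.set0.

Section Core.
Variables (V : finType) (e : rel V).
Hypotheses (e_sym : symmetric e) (e_irr : irreflexive e).

Definition core (C : {set {set V}}) : {set V} := \bigcap_(I in C) I.
Definition hits (F : {set {set {set V}}}) (N : {set {set V}}) : bool :=
  [forall A in F, N :&: A != fset0].
Definition good (U : {set V}) (F : {set {set {set V}}}) : Prop :=
  forall C, C \in F -> [/\ C != fset0, C = KS e (core C) & core C \subset U].

Lemma indep_MIS I : I \in MIS e -> independent e I.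
Proof. by rewrite /MIS inE => /maxsetP []. Qed.

Lemma indepP (I : {set V}) : independent e I -> forall x y, x \in I -> y \in I -> ~~ e x y.
Proof. by move=> /forallP H x y hx hy; move: (H x); rewrite hx /= => /forallP /(_ y); rewrite hy. Qed.

Lemma ext_MIS (A : {set V}) : independent e A -> exists I, I \in MIS e /\ A \subset I.
Proof.
move=> hA; case: (maxset_exists hA) => I hI hAI; exists I; split=> //.
by rewrite /MIS inE.
Qed.

Lemma core_sub (C : {set {set V}}) (I : {set V}) : I \in C -> core C \subset I.
Proof. by move=> hI; rewrite /core (finset.bigcap_inf I). Qed.

Lemma KS_core C S : C = KS e S -> C = KS e (core C).
Proof.
move=> hC.
have hSc : S \subset core C.
  by rewrite /core; apply/bigcapsP => J; rewrite hC finset.in_set => /andP[_].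
apply/setP => I; rewrite /KS finset.in_set.
apply/idP/idP.
- move=> hI; have := hI; rewrite {1}hC finset.in_set => /andP[hM _].
  by rewrite hM /=; exact: core_sub.
- case/andP => hM hc; rewrite hC finset.in_set hM /=. exact: (fintype.subset_trans hSc hc).
Qed.

Lemma KS_sub S : KS e S \subset MIS e.
Proof. by apply/subsetP => I; rewrite inE => /andP[]. Qed.

Lemma CG_sub C : C \in CG e -> C \subset MIS e.
Proof. by case/imsetP => S _ ->; exact: KS_sub. Qed.

Lemma CG_core C : C \in CG e -> C = KS e (core C).
Proof. by case/imsetP => S _ hC; exact: (KS_core hC). Qed.

Lemma good_mem U F C I : good U F -> C \in F -> I \in MIS e -> core C \subset I -> I \in C.
Proof. by move=> hg hC hI hc; case: (hg C hC) => _ -> _; rewrite inE hI. Qed.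

Lemma hits_mono F N (N' : {set {set V}}) : hits F N -> N \subset N' -> hits F N'.
Proof.
move=> /forallP H hN; apply/forallP => A; apply/implyP => hA.
move: (H A); rewrite hA /= => /set0Pn [I]; rewrite inE => /andP[h1 h2].
by apply/set0Pn; exists I; rewrite inE h2 (subsetP hN).
Qed.

Lemma helly U F : good U F -> (forall C D, C \in F -> D \in F -> C :&: D != fset0) ->
  exists N : {set {set V}}, N \subset MIS e /\ hits F N /\ (#|N| <= 1)%N.
Proof.
move=> hg hpw.
pose A := \bigcup_(C in F) core C.
have hA : independent e A.
  apply/forallP => x; apply/implyP => /bigcupP [C hC hx].
  apply/forallP => y; apply/implyP => /bigcupP [D hD hy].
  have /set0Pn [I] := hpw C D hC hD; rewrite inE => /andP[hIC hID].
  have hI : I \in MIS e by case: (hg C hC) => _ hKS _; move: hIC; rewrite hKS inE => /andP[].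
  apply: (indepP (indep_MIS hI)).
  - exact: (subsetP (core_sub hIC)).
  - exact: (subsetP (core_sub hID)).
case: (ext_MIS hA) => J [hJ hAJ].
exists [set J]; split; first by rewrite finset.sub1set.
split; last by rewrite cards1.
apply/forallP => C; apply/implyP => hC; apply/set0Pn; exists J.
rewrite inE set11 /=; apply: (good_mem hg hC hJ).
by apply: fintype.subset_trans hAJ; exact: (finset.bigcup_sup C hC).
Qed.


Lemma good_MIS U F C I : good U F -> C \in F -> I \in C -> I \in MIS e.
Proof. by move=> hg hC; case: (hg C hC) => _ -> _; rewrite finset.in_set => /andP[]. Qed.

Lemma edge_lemma U F C D : good U F -> C \in F -> D \in F -> C :&: D == fset0 ->
  exists s t, [/\ s \in core C, t \in core D & e s t].
Proof.
move=> hg hC hD hCD.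
case: (boolP [exists s in core C, exists t in core D, e s t]).
  by case/existsP => s /andP[hs /existsP[t /andP[ht hst]]]; exists s, t.
move=> hne.
have hCn : C != fset0 by case: (hg C hC).
have hDn : D != fset0 by case: (hg D hD).
case/set0Pn: hCn => I hI; case/set0Pn: hDn => J hJ.
have hIM := good_MIS hg hC hI; have hJM := good_MIS hg hD hJ.
have hA : independent e (core C :|: core D).
  apply/forallP => x; apply/implyP => hx; apply/forallP => y; apply/implyP => hy.
  move: hx hy; rewrite !inE => /orP[hx|hx] /orP[hy|hy].
  - exact: (indepP (indep_MIS hIM) (subsetP (core_sub hI) _ hx) (subsetP (core_sub hI) _ hy)).
  - apply/negP => hxy; move/negP: hne; apply; apply/existsP; exists x; rewrite hx /=.
    by apply/existsP; exists y; rewrite hy.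
  - apply/negP => hxy; move/negP: hne; apply; apply/existsP; exists y; rewrite hy /=.
    by apply/existsP; exists x; rewrite hx /= e_sym.
  - exact: (indepP (indep_MIS hJM) (subsetP (core_sub hJ) _ hx) (subsetP (core_sub hJ) _ hy)).
case: (ext_MIS hA) => K [hK hAK].
have hKC : K \in C by apply: (good_mem hg hC hK); apply: fintype.subset_trans hAK; exact: finset.subsetUl.
have hKD : K \in D by apply: (good_mem hg hD hK); apply: fintype.subset_trans hAK; exact: finset.subsetUr.
by move/eqP: hCD => /setP /(_ K); rewrite !inE hKC hKD.
Qed.

Definition Ured (U : {set V}) s t : {set V} :=
  [set x in U | [&& ~~ e s x, ~~ e t x, x != s & x != t]].

Lemma restrict_lemma U F C q q' s t : good U F -> C \in F -> q \in F -> q' \in F ->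
  C :&: q != fset0 -> C :&: q' != fset0 -> s \in core q -> t \in core q' -> e s t ->
  core C \subset Ured U s t.
Proof.
move=> hg hC hq hq' h1 h2 hs ht hst.
case/set0Pn: h1 => I; rewrite inE => /andP[hIC hIq].
case/set0Pn: h2 => J; rewrite inE => /andP[hJC hJq].
have hIM := good_MIS hg hC hIC; have hJM := good_MIS hg hC hJC.
have iI := indepP (indep_MIS hIM); have iJ := indepP (indep_MIS hJM).
have sI : s \in I := subsetP (core_sub hIq) _ hs.
have tJ : t \in J := subsetP (core_sub hJq) _ ht.
apply/subsetP => x hx; rewrite inE.
have xI : x \in I := subsetP (core_sub hIC) _ hx.
have xJ : x \in J := subsetP (core_sub hJC) _ hx.
case: (hg C hC) => _ _ hCU.
rewrite (subsetP hCU _ hx) /= (iI _ _ sI xI) (iJ _ _ tJ xJ) /=.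
apply/andP; split.
- by apply/eqP => hxs; subst x; move: (iJ _ _ xJ tJ); rewrite hst.
- by apply/eqP => hxt; subst x; move: (iI _ _ sI xI); rewrite hst.
Qed.

Definition bmU (U : {set V}) (k : nat) : Prop := exists u v : nat -> V,
  [/\ forall i j, (i < k)%N -> (j < k)%N -> e (u i) (v j) = (i == j),
      forall i j, (i < k)%N -> (j < k)%N -> u i = u j -> i = j,
      forall i j, (i < k)%N -> (j < k)%N -> v i = v j -> i = j,
      forall i j, (i < k)%N -> (j < k)%N -> u i != v j &
      forall i, (i < k)%N -> (u i \in U) && (v i \in U)].


Lemma bm0 U (x : V) : bmU U 0.
Proof. by exists (fun _ => x), (fun _ => x); split. Qed.

Lemma ltS_case i k : (i < k.+1)%N -> i = k \/ (i < k)%N.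
Proof. by rewrite ltnS leq_eqVlt => /orP[/eqP->|->]; [left|right]. Qed.

Lemma bm_ext (U : {set V}) s t k : s \in U -> t \in U -> e s t -> bmU (Ured U s t) k -> bmU U k.+1.
Proof.
move=> hs ht hst [u [v [h1 h2 h3 h4 h5]]].
have hsU i : (i < k)%N -> [&& u i \in U, ~~ e s (u i), ~~ e t (u i), u i != s & u i != t].
  by move=> hi; move: (h5 i hi) => /andP[]; rewrite inE.
have hsV i : (i < k)%N -> [&& v i \in U, ~~ e s (v i), ~~ e t (v i), v i != s & v i != t].
  by move=> hi; move: (h5 i hi) => /andP[_]; rewrite inE.
have hnst : s != t by apply/eqP => est; move: hst; rewrite est e_irr.
exists (fun i => if i == k then s else u i), (fun i => if i == k then t else v i).
split.
- move=> i j /ltS_case [->|hi] /ltS_case [->|hj].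
  + by rewrite eqxx.
  + rewrite eqxx (ltn_eqF hj) eq_sym (ltn_eqF hj).
    by case/and5P: (hsV j hj) => _ /negbTE -> _ _ _.
  + rewrite eqxx (ltn_eqF hi).
    by case/and5P: (hsU i hi) => _ _ /negbTE; rewrite e_sym => ->.
  + by rewrite (ltn_eqF hi) (ltn_eqF hj); apply: h1.
- move=> i j /ltS_case [->|hi] /ltS_case [->|hj] //.
  + rewrite eqxx (ltn_eqF hj) => hh; case/and5P: (hsU j hj) => _ _ _ + _.
    by rewrite hh eqxx.
  + rewrite eqxx (ltn_eqF hi) => hh; case/and5P: (hsU i hi) => _ _ _ + _.
    by rewrite hh eqxx.
  + by rewrite (ltn_eqF hi) (ltn_eqF hj); apply: h2.
- move=> i j /ltS_case [->|hi] /ltS_case [->|hj] //.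
  + rewrite eqxx (ltn_eqF hj) => hh; case/and5P: (hsV j hj) => _ _ _ _.
    by rewrite hh eqxx.
  + rewrite eqxx (ltn_eqF hi) => hh; case/and5P: (hsV i hi) => _ _ _ _.
    by rewrite hh eqxx.
  + by rewrite (ltn_eqF hi) (ltn_eqF hj); apply: h3.
- move=> i j /ltS_case [->|hi] /ltS_case [->|hj].
  + by rewrite eqxx.
  + by rewrite eqxx (ltn_eqF hj) eq_sym; case/and5P: (hsV j hj) => _ _ _ + _.
  + by rewrite eqxx (ltn_eqF hi); case/and5P: (hsU i hi) => _ _ _ _.
  + by rewrite (ltn_eqF hi) (ltn_eqF hj); apply: h4.
- move=> i /ltS_case [->|hi].
  + by rewrite eqxx hs ht.
  + by rewrite (ltn_eqF hi); case/and5P: (hsU i hi) => -> _ _ _ _; case/and5P: (hsV i hi).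
Qed.

Lemma bm_top k : bmU [set: V] k -> (k <= nu_bi e)%N.
Proof.
move=> [u [v [h1 h2 h3 h4 _]]].
pose u' := [ffun i : 'I_k => u i]; pose v' := [ffun i : 'I_k => v i].
have iu : injective u'.
  by move=> i j; rewrite !ffunE => /(h2 _ _ (ltn_ord i) (ltn_ord j)) /val_inj.
have hk : (k < #|V|.+1)%N.
  by rewrite ltnS; have := leq_card u' iu; rewrite card_ord.
have hb : has_bi_matching e k.
  apply/existsP; exists u'; apply/existsP; exists v'.
  apply/and4P; split.
  - by apply/injectiveP.
  - by apply/injectiveP => i j; rewrite !ffunE => /(h3 _ _ (ltn_ord i) (ltn_ord j)) /val_inj.
  - by apply/forallP => i; apply/forallP => j; rewrite !ffunE h4.
  - apply/forallP => i; apply/forallP => j; rewrite !ffunE h1 //.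
by have := @leq_bigmax_cond _ (fun t : 'I_#|V|.+1 => has_bi_matching e t) (fun t => nat_of_ord t) (Ordinal hk) hb.
Qed.

Lemma card_bigcup_le (I : finType) (P : pred I) (g : I -> {set {set V}}) :
  (#|\bigcup_(i | P i) g i| <= \sum_(i | P i) #|g i|)%N.
Proof.
apply: (big_rec2 (fun (A : {set {set V}}) n => (#|A| <= n)%N)); first by rewrite cards0.
move=> i A n _ hA; apply: leq_trans (leq_card_setU _ _) _; exact: leq_add.
Qed.

Lemma union_hits (I : finType) (P : pred I) (Fs : I -> {set {set {set V}}}) k :
  (forall i, P i -> exists N : {set {set V}}, N \subset MIS e /\ hits (Fs i) N /\ (#|N| <= k)%N) ->
  exists N : {set {set V}}, N \subset MIS e /\ (forall i, P i -> hits (Fs i) N) /\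
    (#|N| <= #|[set i | P i]| * k)%N.
Proof.
move=> H.
pose g i := odflt fset0 [pick N : {set {set V}} | (N \subset MIS e) && hits (Fs i) N && (#|N| <= k)%N].
have hg i : P i -> [/\ g i \subset MIS e, hits (Fs i) (g i) & (#|g i| <= k)%N].
  move=> hi; rewrite /g; case: pickP => [N /andP[/andP[h1 h2] h3] | hn] //=.
  by exfalso; case: (H i hi) => N [h1 [h2 h3]]; move: (hn N); rewrite h1 h2 h3.
exists (\bigcup_(i | P i) g i); split; [|split].
- by apply/bigcupsP => i hi; case: (hg i hi).
- move=> i hi; case: (hg i hi) => _ h _; apply: hits_mono h _.
  exact: (finset.bigcup_sup i hi).
- apply: leq_trans (card_bigcup_le _ _) _; rewrite -sum_nat_cond_const.
  by apply: leq_sum => i hi; case: (hg i hi).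
Qed.

Lemma trivIset0' : finset.trivIset (fset0 : {set {set {set V}}}).
Proof. by apply/finset.trivIsetP => A B; rewrite inE. Qed.

Lemma maxdisj (F : {set {set {set V}}}) : exists Q : {set {set {set V}}}, [/\ Q \subset F, finset.trivIset Q &
  forall P : {set {set {set V}}}, P \subset F -> finset.trivIset P -> (#|P| <= #|Q|)%N].
Proof.
have h0 : ((fset0 : {set {set {set V}}}) \subset F) && finset.trivIset (fset0 : {set {set {set V}}}) by rewrite finset.sub0set trivIset0'.
case: (@arg_maxnP _ fset0 (fun P : {set {set {set V}}} => (P \subset F) && finset.trivIset P) (fun P : {set {set {set V}}} => #|P|) h0) => Q /andP[h1 h2] h3.
exists Q; split=> // P hP tP; by apply: h3; rewrite hP tP.
Qed.

Fixpoint fW (W n : nat) : nat := if n is m.+1 then (W + W * W * fW W m)%N else 1%N.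

Lemma fW_ge1 W n : (1 <= W)%N -> (1 <= fW W n)%N.
Proof. by case: n => //= n hW; apply: leq_trans hW (leq_addr _ _). Qed.

Lemma fW_le W n : (1 <= W)%N -> (fW W n <= (2 * W * W) ^ n)%N.
Proof.
move=> hW; elim: n => [|n IH] //=.
rewrite expnS.
have hP : (1 <= (2 * W * W) ^ n)%N by rewrite expn_gt0; nia.
nia.
Qed.

Lemma good_sub U F (F' : {set {set {set V}}}) : good U F -> F' \subset F -> good U F'.
Proof. by move=> hg hs C hC; apply: hg; exact: (subsetP hs). Qed.

Lemma hits_in F N C : hits F N -> C \in F -> N :&: C != fset0.
Proof. by move=> /forall_inP H hC; apply: H. Qed.

Lemma pw_case W n U F : good U F ->
  (forall P : {set {set {set V}}}, P \subset F -> finset.trivIset P -> (#|P| <= W)%N) ->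
  (forall C D, C \in F -> D \in F -> C :&: D != fset0) ->
  exists N : {set {set V}}, N \subset MIS e /\ hits F N /\ (#|N| <= fW W n)%N.
Proof.
move=> hg hW hpw.
case: (F =P fset0) => [F0 | /eqP Fn0].
  exists fset0; split; first exact: finset.sub0set.
  by split; [apply/forall_inP => C; rewrite F0 inE | rewrite cards0].
case: (helly hg hpw) => N [h1 [h2 h3]]; exists N; split=> //; split=> //.
apply: leq_trans h3 _; apply: fW_ge1.
case/set0Pn: Fn0 => C hC.
have := hW [set C]; rewrite cards1; apply; last exact: finset.trivIset1.
by rewrite finset.sub1set.
Qed.

Lemma core_lemma W n : forall (U : {set V}) (F : {set {set {set V}}}),
  (forall k, bmU U k -> (k <= n)%N) -> good U F ->
  (forall P : {set {set {set V}}}, P \subset F -> finset.trivIset P -> (#|P| <= W)%N) ->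
  exists N : {set {set V}}, N \subset MIS e /\ hits F N /\ (#|N| <= fW W n)%N.
Proof.
elim: n => [|n IH] U F hbm hg hW.
all: case: (boolP [forall C in F, forall D in F, C :&: D != fset0]) => hpw.
- apply: pw_case hg hW _ => C D hC hD.
  by move/forall_inP: hpw => /(_ C hC) /forall_inP /(_ D hD).
- exfalso.
  case/forall_inPn: hpw => C hC /forall_inPn [D hD]; rewrite negbK => hCD.
  case: (edge_lemma hg hC hD hCD) => s [t [hs ht hst]].
  have sU : s \in U by case: (hg C hC) => _ _ /subsetP; apply.
  have tU : t \in U by case: (hg D hD) => _ _ /subsetP; apply.
  by have := hbm 1%N (bm_ext sU tU hst (bm0 _ s)).
- apply: pw_case hg hW _ => C D hC hD.
  by move/forall_inP: hpw => /(_ C hC) /forall_inP /(_ D hD).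
have hne C : C \in F -> C != fset0 by move=> hC; case: (hg C hC).
case: (maxdisj F) => Q [hQF tQ hQmax].
have hQW : (#|Q| <= W)%N := hW Q hQF tQ.
have tQP := finset.trivIsetP tQ.
have disjQ q q' : q \in Q -> q' \in Q -> q != q' -> q :&: q' == fset0.
  by move=> hq hq' hqq; rewrite finset.setI_eq0; apply: tQP.
have hmax C : C \in F -> exists2 q, q \in Q & C :&: q != fset0.
  move=> hC; case: (boolP (C \in Q)) => hCQ.
    by exists C => //; rewrite finset.setIid; apply: hne.
  case: (boolP [exists q in Q, C :&: q != fset0]) => [/exists_inP [q hq h] | hno].
    by exists q.
  exfalso; move/exists_inPn: hno => hno.
  have : (#|C |: Q| <= #|Q|)%N.
    apply: hQmax.
      by rewrite finset.subUset finset.sub1set hC hQF.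
    apply/finset.trivIsetP => A B; rewrite !inE => /orP[/eqP->|hA] /orP[/eqP->|hB] hAB.
    + by rewrite eqxx in hAB.
    + by rewrite -finset.setI_eq0; move: (hno B hB); rewrite negbK.
    + by rewrite disjoint_sym -finset.setI_eq0; move: (hno A hA); rewrite negbK.
    + exact: tQP.
  by rewrite cardsU1 hCQ ltnn.
pose Y q := [set C in F | [forall q' in Q, (q' != q) ==> (C :&: q' == fset0)]].
pose Dfam (p : {set {set V}} * {set {set V}}) := [set C in F | (C :&: p.1 != fset0) && (C :&: p.2 != fset0)].
have YF q : Y q \subset F by apply/subsetP => C; rewrite inE => /andP[].
have DF p : Dfam p \subset F by apply/subsetP => C; rewrite inE => /andP[].
have [N1 [N1M [N1h N1c]]] : exists N : {set {set V}}, N \subset MIS e /\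
    (forall q, q \in Q -> hits (Y q) N) /\ (#|N| <= #|[set q | q \in Q]| * 1)%N.
  apply: (union_hits (P := fun q => q \in Q)) => q hq.
  apply: (helly (good_sub hg (YF q))) => C D.
  rewrite !inE => /andP[hC /forall_inP hCY] /andP[hD /forall_inP hDY].
  apply/negP => hCD.
  have hCq' q' : q' \in Q -> q' != q -> C :&: q' == fset0.
    by move=> h1 h2; move: (hCY q' h1); rewrite h2.
  have hDq' q' : q' \in Q -> q' != q -> D :&: q' == fset0.
    by move=> h1 h2; move: (hDY q' h1); rewrite h2.
  have CnQ : C \notin Q :\ q.
    rewrite !inE; apply/negP => /andP[h1 h2]; move: (hCq' C h2 h1).
    by rewrite finset.setIid; apply/negP; apply: hne.
  have DnQ : D \notin Q :\ q.
    rewrite !inE; apply/negP => /andP[h1 h2]; move: (hDq' D h2 h1).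
    by rewrite finset.setIid; apply/negP; apply: hne.
  have CD : C != D.
    by apply/eqP => hh; subst D; move: hCD; rewrite finset.setIid; apply/negP; apply: hne.
  have : (#|C |: (D |: (Q :\ q))| <= #|Q|)%N.
    apply: hQmax.
      rewrite finset.subUset finset.sub1set hC finset.subUset finset.sub1set hD /=.
      by apply: fintype.subset_trans hQF; apply: finset.subsetDl.
    apply/finset.trivIsetP => A B; rewrite !inE.
    move=> /orP[/eqP->|/orP[/eqP->|/andP[hA1 hA2]]] /orP[/eqP->|/orP[/eqP->|/andP[hB1 hB2]]] hAB.
    + by rewrite eqxx in hAB.
    + by rewrite -finset.setI_eq0.
    + by rewrite -finset.setI_eq0; apply: hCq'.
    + by rewrite -finset.setI_eq0 finset.setIC.
    + by rewrite eqxx in hAB.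
    + by rewrite -finset.setI_eq0; apply: hDq'.
    + by rewrite disjoint_sym -finset.setI_eq0; apply: hCq'.
    + by rewrite disjoint_sym -finset.setI_eq0; apply: hDq'.
    + by apply: tQP.
  rewrite cardsU1 finset.in_setU finset.in_set1 negb_or CD CnQ cardsU1 DnQ (cardsD1 q Q) hq /= => hh; lia.
have [N2 [N2M [N2h N2c]]] : exists N : {set {set V}}, N \subset MIS e /\
    (forall p, (p.1 \in Q) && (p.2 \in Q) && (p.1 != p.2) -> hits (Dfam p) N) /\
    (#|N| <= #|[set p | (p.1 \in Q) && (p.2 \in Q) && (p.1 != p.2)]| * fW W n)%N.
  apply: (union_hits (P := fun p => (p.1 \in Q) && (p.2 \in Q) && (p.1 != p.2))).
  case=> q q' /= /andP[/andP[hq hq'] hqq'].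
  have hq1 := subsetP hQF _ hq; have hq2 := subsetP hQF _ hq'.
  case: (edge_lemma hg hq1 hq2 (disjQ _ _ hq hq' hqq')) => s [t [hs ht hst]].
  have sU : s \in U by case: (hg q hq1) => _ _ /subsetP; apply.
  have tU : t \in U by case: (hg q' hq2) => _ _ /subsetP; apply.
  apply: (IH (Ured U s t)).
  - by move=> k hk; have := hbm k.+1 (bm_ext sU tU hst hk).
  - move=> C; rewrite inE /= => /andP[hC /andP[h1 h2]].
    case: (hg C hC) => h3 h4 _; split=> //.
    exact: (restrict_lemma hg hC hq1 hq2 h1 h2 hs ht hst).
  - move=> P hP tP; apply: hW => //; apply: fintype.subset_trans hP (DF _).
exists (N1 :|: N2); split; [by rewrite finset.subUset N1M N2M|split].
- apply/forall_inP => C hC.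
  pose Z := [set q in Q | C :&: q != fset0].
  case: (ltnP 1 #|Z|) => hZ.
    case/card_gt1P: hZ => q1 [q2 [hq1 hq2 hq12]].
    move: hq1 hq2; rewrite !inE => /andP[hq1 h1] /andP[hq2 h2].
    have := hits_in (N2h (q1, q2) _) (_ : C \in Dfam (q1, q2)).
    rewrite hq1 hq2 hq12 => /(_ isT); rewrite inE hC h1 h2 => /(_ isT).
    case/set0Pn => I; rewrite !inE => /andP[hI hIC]; apply/set0Pn; exists I.
    by rewrite !inE hI hIC orbT.
  case: (hmax C hC) => q hq hCq.
  have hqZ : q \in Z by rewrite inE hq hCq.
  have hCY : C \in Y q.
    rewrite inE hC /=; apply/forall_inP => q' hq'; apply/implyP => hqq'.
    apply/negPn/negP => hCq'.
    have hq'Z : q' \in Z by rewrite inE hq' hCq'.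
    move/card_le1P: hZ => /(_ q hqZ q'); rewrite hq'Z inE => /esym /eqP hh.
    by rewrite hh eqxx in hqq'.
  case/set0Pn: (hits_in (N1h q hq) hCY) => I; rewrite !inE => /andP[hI hIC].
  by apply/set0Pn; exists I; rewrite !inE hI hIC.
- apply: leq_trans (leq_card_setU _ _) _; rewrite /=.
  have e1 : [set q | q \in Q] = Q by apply/setP => q; rewrite inE.
  rewrite e1 muln1 in N1c.
  have e2 : (#|[set p | (p.1 \in Q) && (p.2 \in Q) && (p.1 != p.2)]| <= #|Q| * #|Q|)%N.
    rewrite -cardsX; apply: subset_leq_card; apply/subsetP => -[a b]; rewrite !inE /=.
    by case/andP => /andP[-> ->].
  apply: leq_add; first exact: leq_trans N1c hQW.
  apply: leq_trans N2c _; apply: leq_mul => //.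
  apply: leq_trans e2 _; exact: leq_mul.
Qed.

Lemma bigmin_le (I : finType) (P : pred I) (f : I -> nat) x0 i : P i ->
  (\big[minn/x0]_(j | P j) f j <= f i)%N.
Proof.
move=> hi; have : i \in index_enum I := mem_index_enum i.
elim: (index_enum I) => [//|a r IH]; rewrite inE => /orP[/eqP <-|hr]; rewrite big_cons.
- by rewrite hi geq_minl.
- by case: (P a); [apply: leq_trans (geq_minr _ _) (IH hr) | exact: IH hr].
Qed.

Lemma disj_sum (R : realType) (Q : {set {set {set V}}}) (f : {set V} -> R) :
  (forall I, 0 <= f I) -> finset.trivIset Q -> (forall C, C \in Q -> C \subset MIS e) ->
  \sum_(C in Q) \sum_(I in C) f I <= \sum_(I in MIS e) f I.
Proof.
move=> hf tQ hQ; rewrite -(finset.big_trivIset _ tQ).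
have hc : finset.cover Q \subset MIS e by apply/bigcupsP => C hC; apply: hQ.
rewrite [X in _ <= X](big_setID (finset.cover Q)) /=.
have -> : MIS e :&: finset.cover Q = finset.cover Q by apply/finset.setIidPr.
by rewrite lerDl; apply: sumr_ge0 => I _; apply: hf.
Qed.

Lemma sum_lb (R : realType) (Q : {set {set {set V}}}) (g : {set {set V}} -> R) c :
  (forall C, C \in Q -> c <= g C) -> #|Q|%:R * c <= \sum_(C in Q) g C.
Proof.
move=> h; rewrite mulr_natl -sumr_const; exact: ler_sum.
Qed.

Lemma pair_card (F Q : {set {set {set V}}}) C D :
  (forall P : {set {set {set V}}}, P \subset F -> finset.trivIset P -> (#|P| <= #|Q|)%N) ->
  (#|Q| <= 1)%N -> C \in F -> D \in F -> C != fset0 -> C :&: D != fset0.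
Proof.
move=> hQmax hQ1 hC hD hCn; apply/negP => hCD.
have CD : C != D by apply/eqP => hh; subst D; move: hCD; rewrite finset.setIid; apply/negP.
have hsub : [set C; D] \subset F by rewrite finset.subUset !finset.sub1set hC hD.
have htr : finset.trivIset [set C; D].
  apply/finset.trivIsetP => A B; rewrite !inE => /orP[/eqP->|/eqP->] /orP[/eqP->|/eqP->];
  rewrite ?eqxx // => _; rewrite -finset.setI_eq0 // finset.setIC //.
have h := hQmax _ hsub htr; rewrite cards2 CD /= in h; by rewrite ltnNge hQ1 in h.
Qed.

End Core.

Lemma ln_ge_half (R : realType) (x : R) : 2 <= x -> 2^-1 <= ln x.
Proof.
move=> hx; have hx0 : 0 < x by lra.
have := expR_ge1Dx (- ln x); rewrite expRN lnK ?posrE //.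
have : x^-1 <= 2^-1 by rewrite lef_pV2 ?posrE //; lra.
lra.
Qed.

Lemma bound_ge1 (R : realType) (nu : nat) (x : R) : 1 <= x -> 1 <= (480 * x) `^ (8 * nu%:R * ln x).
Proof.
move=> hx; rewrite -[X in X <= _](powRr0 (480 * x)); apply: ler_powR; first lra.
by apply: mulr_ge0; [apply: mulr_ge0 | apply: ln_ge0].
Qed.

Lemma bound_main (R : realType) (nu : nat) (x W : R) : 2 <= x -> 0 <= W -> W <= x ->
  (2 * W ^+ 2) ^+ nu <= (480 * x) `^ (8 * nu%:R * ln x).
Proof.
move=> hx hW hWx; rewrite mulrAC powRrM powR_mulrn ?powR_ge0 //.
apply: lerXn2r; rewrite ?nnegrE ?powR_ge0 //; first by apply: mulr_ge0 => //; apply: exprn_ge0.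
have hl := ln_ge_half hx.
apply: (@le_trans _ _ ((480 * x) `^ 2%:R)).
  by rewrite powR_mulrn; [nra | lra].
apply: ler_powR; lra.
Qed.


Unset Implicit Arguments.

Theorem theorem2p28 (R : realType) (V : finType) (e : rel V)
    (e_sym : symmetric e) (e_irr : irreflexive e) :
  (forall eps : R, 0 < eps ->
     has_weak_nets e eps
       ((480 / eps) `^ (8 * (nu_bi e)%:R * ln (1 / eps))))
  /\
  (forall F : {set {set {set V}}},
     F \subset CG e -> F != finset.set0 -> finset.set0 \notin F ->
     ((tauG e F)%:R : R) <=
       (480 * tau_starG e R F) `^ (8 * (nu_bi e)%:R * ln (tau_starG e R F))).
Proof.
have hbt : forall k, bmU e [set: V] k -> (k <= nu_bi e)%N by move=> k; apply: bm_top.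
split.
- move=> eps heps mu [h0 [hout hsum]].
  rewrite mul1r.
  pose F1 := [set C in CG e | eps <= measure_of mu C].
  have hF1 C : C \in CG e -> eps <= measure_of mu C -> C \in F1 by move=> h1 h2; rewrite inE h1 h2.
  have hg : good e [set: V] F1.
    move=> C; rewrite inE => /andP[hC hle]; split.
    + apply/eqP => C0; move: hle; rewrite /measure_of C0 big_set0; lra.
    + exact: CG_core.
    + exact: finset.subsetT.
  have hnet (N : {set {set V}}) : N \subset MIS e -> hits F1 N -> weak_net e mu eps N.
    by move=> h1 h2; split=> // C hC hle; apply: (hits_in h2); apply: hF1.
  case: (maxdisj F1) => Q [hQF tQ hQmax].
  have hQeps : #|Q|%:R * eps <= 1.
    have hsQ : forall C, C \in Q -> C \subset MIS e.
      by move=> C hC; move: (subsetP hQF _ hC); rewrite inE => /andP[/CG_sub].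
    have := disj_sum h0 tQ hsQ; rewrite hsum => H; apply: le_trans H.
    apply: (sum_lb (g := fun C => \sum_(I in C) mu I)) => C hC.
    by move: (subsetP hQF _ hC); rewrite inE => /andP[_].
  case: (F1 =P finset.set0) => [F0 | /eqP Fn0].
    exists finset.set0; split; last by rewrite cards0 powR_ge0.
    apply: hnet; first exact: finset.sub0set.
    by apply/forall_inP => C; rewrite F0 inE.
  have hQ1 : (1 <= #|Q|)%N.
    case/set0Pn: Fn0 => C hC.
    have := hQmax [set C]; rewrite cards1; apply; last exact: finset.trivIset1.
    by rewrite finset.sub1set.
  have hQ1R : 1 <= (#|Q|%:R : R) by rewrite ler1n.
  have hie : eps * eps^-1 = 1 by rewrite mulfV // gt_eqF.
  have hinv0 : 0 < eps^-1 by rewrite invr_gt0.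
  have hQinv : (#|Q|%:R : R) <= eps^-1 by nra.
  case: (leqP #|Q| 1) => hQ.
  + have [N [h1 [h2 h3]]] := helly hg (fun C D hC hD =>
        pair_card hQmax hQ hC hD (let: And3 x _ _ := hg C hC in x)).
    exists N; split; first exact: hnet.
    have hx1 : 1 <= eps^-1 by lra.
    apply: le_trans (bound_ge1 (nu_bi e) hx1); by rewrite lern1.
  + have [N [h1 [h2 h3]]] := core_lemma e_sym e_irr hbt hg hQmax.
    exists N; split; first exact: hnet.
    have hc := leq_trans h3 (fW_le (nu_bi e) hQ1).
    apply: le_trans (_ : ((2 * #|Q| * #|Q|) ^ nu_bi e)%N%:R <= _).
      by rewrite ler_nat.
    rewrite natrX natrM natrM -mulrA -expr2.
    apply: bound_main; last exact: hQinv.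
    * have : (2 : R) <= #|Q|%:R by rewrite ler_nat.
      nra.
    * exact: ler0n.
- move=> F hFC hFn hF0.
  have hg : good e [set: V] F.
    move=> C hC; split.
    + by apply/eqP => C0; move: hF0; rewrite -C0 hC.
    + exact: CG_core (subsetP hFC _ hC).
    + exact: finset.subsetT.
  case: (maxdisj F) => Q [hQF tQ hQmax].
  have htau (N : {set {set V}}) : N \subset MIS e -> hits F N -> (tauG e F <= #|N|)%N.
    by move=> h1 h2; rewrite /tauG; apply: bigmin_le; rewrite /hitting h1.
  have hQ1 : (1 <= #|Q|)%N.
    case/set0Pn: hFn => C hC.
    have := hQmax [set C]; rewrite cards1; apply; last exact: finset.trivIset1.
    by rewrite finset.sub1set.
  have hQT : (#|Q|%:R : R) <= tau_starG e R F.
    apply: lb_le_inf.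
      exists (\sum_(x in MIS e) (fun _ => (1 : R)) x), (fun _ => 1); split=> //.
      split; first by move=> x; rewrite lexx ler01.
      move=> A hA; rewrite sumr_const -mulr_natl mulr1 ler1n card_gt0.
      by apply/eqP => A0; move: hF0; rewrite -A0 hA.
    move=> t [f [[hf01 hfA] ->]].
    have hf0 I : 0 <= f I by case/andP: (hf01 I).
    apply: le_trans (disj_sum hf0 tQ _).
      rewrite -[X in X <= _]mulr1; apply: sum_lb => C hC; apply: hfA; exact: (subsetP hQF).
    by move=> C hC; apply: CG_sub; apply: (subsetP hFC); apply: (subsetP hQF).
  have hQ1R : 1 <= (#|Q|%:R : R) by rewrite ler1n.
  case: (leqP #|Q| 1) => hQ.
  + have [N [h1 [h2 h3]]] := helly hg (fun C D hC hD =>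
        pair_card hQmax hQ hC hD (let: And3 x _ _ := hg C hC in x)).
    have hx1 : 1 <= tau_starG e R F by lra.
    apply: le_trans (bound_ge1 (nu_bi e) hx1).
    by rewrite lern1; apply: leq_trans (htau N h1 h2) h3.
  + have [N [h1 [h2 h3]]] := core_lemma e_sym e_irr hbt hg hQmax.
    have hc := leq_trans (htau N h1 h2) (leq_trans h3 (fW_le (nu_bi e) hQ1)).
    apply: le_trans (_ : ((2 * #|Q| * #|Q|) ^ nu_bi e)%N%:R <= _).
      by rewrite ler_nat.
    rewrite natrX natrM natrM -mulrA -expr2.
    apply: bound_main; last exact: hQT.
    * have : (2 : R) <= #|Q|%:R by rewrite ler_nat.
      lra.
    * exact: ler0n.
Qed.
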